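(* Let $c>0$ and let $\mathcal{F}_c:\mathbb{R}\to[-c,c]$ be defined by $\mathcal{F}_c(z)=-c$ if $z<-c$, $\mathcal{F}_c(z)=z$ if $-c\le z\le c$, and $\mathcal{F}_c(z)=c$ if $z>c$. Let $G=(V,E)$ be a complete signed graph on $V=\{1,\dots,n\}$ that is structurally balanced with respect to a partition $V=V_1\cup V_2$. Let $\alpha\in(0,1/2)$ and $\beta>0$, and define $\theta:E\to\mathbb{R}$ by $\theta(\{i,j\})=\alpha$ if $\{i,j\}\in E^+$ and $\theta(\{i,j\})=-\beta$ if $\{i,j\}\in E^-$. Consider the random dynamics on $x(t)\in[-c,c]^n$ in which at each time $t$ an edge $\{i,j\}\in E$ is selected by the random pair selection process and $$x_s(t+1)=\mathcal{F}_c\big((1-\theta(\{i,j\}))x_s(t)+\theta(\{i,j\})x_{-s}(t)\big),\quad s\in\{i,j\},\ \{-s\}=\{i,j\}\setminus\{s\},$$ while $x_k(t+1)=x_k(t)$ for all $k\notin\{i,j\}$. Then there exists $\beta_0>0$ such that for every $\beta>\beta_0$ and for Lebesgue-almost every initial value $x(0)$, there is a random variable $l(x(0))$ taking values in $\{-c,c\}$ such that $$\mathbb{P}\Big(\lim_{t\to\infty}x_i(t)=l(x(0))\ \forall i\in V_1;\ \lim_{t\to\infty}x_i(t)=-l(x(0))\ \forall i\in V_2\Big)=1.$$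
   Context: A signed graph is an undirected simple graph whose edge set $E$ is partitioned into positive edges $E^+$ and negative edges $E^-$; it is complete if every pair of distinct nodes is joined by an edge (positive or negative). A signed graph is structurally balanced if there is a partition $V=V_1\cup V_2$ into two nonempty disjoint sets such that every edge between $V_1$ and $V_2$ is negative and every edge within $V_1$ or within $V_2$ is positive. Random pair selection process: the edges selected at times $t=0,1,2,\dots$ are independent, each drawn uniformly at random from $E$. *)

(* Defs.v *)
From HB Require Import structures.
From mathcomp Require Import all_boot all_order all_algebra.
From mathcomp Require Import all_classical all_reals all_analysis.
Set Implicit Arguments. Unset Strict Implicit. Unset Printing Implicit Defensive.
Import Order.TTheory GRing.Theory Num.Theory.
Import numFieldNormedType.Exports.
Local Open Scope classical_set_scope.
Local Open Scope ring_scope.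

(* Edges of the complete graph on V = 'I_n: unordered pairs {i,j}, i <> j,
   represented as ordered pairs (i,j) with i < j. *)
Definition edge (n : nat) := {p : 'I_n * 'I_n | (p.1 < p.2)%N}.

Definition Fc {R : realType} (c z : R) : R :=
  if z < - c then - c else if z <= c then z else c.

(* complete signed graph: pos i j = true iff {i,j} in E^+, otherwise in E^- *)
Definition signed_complete n (pos : rel 'I_n) :=
  forall i j, i != j -> pos i j = pos j i.

Definition structurally_balanced n (pos : rel 'I_n) (V1 V2 : {set 'I_n}) :=
  [/\ (exists i, i \in V1), (exists j, j \in V2), (forall k, ~~ ((k \in V1) && (k \in V2))) & (forall k, (k \in V1) || (k \in V2))] /\
  ((forall i j, i != j -> i \in V1 -> j \in V2 -> ~~ pos i j /\ ~~ pos j i) /\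
      (forall i j, i != j -> ((i \in V1) && (j \in V1)) || ((i \in V2) && (j \in V2))
                 -> pos i j)).

Definition theta {R : realType} n (pos : rel 'I_n) (alpha beta : R) (i j : 'I_n) : R :=
  if pos i j then alpha else - beta.

Definition step {R : realType} n (pos : rel 'I_n) (c alpha beta : R)
    (e : edge n) (x : 'I_n -> R) : 'I_n -> R :=
  let i := (val e).1 in let j := (val e).2 in
  let th := theta pos alpha beta i j in
  fun k => if k == i then Fc c ((1 - th) * x i + th * x j)
           else if k == j then Fc c ((1 - th) * x j + th * x i)
           else x k.

Fixpoint traj {R : realType} n (pos : rel 'I_n) (c alpha beta : R)
    (es : nat -> edge n) (x0 : 'I_n -> R) (t : nat) : 'I_n -> R :=
  match t with
  | 0 => x0
  | t'.+1 => step pos c alpha beta (es t') (traj pos c alpha beta es x0 t')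
  end.

Definition lebesgue_null {R : realType} n (N : set ('I_n -> R)) :=
  forall eps : R, 0 < eps -> exists a b : nat -> 'I_n -> R,
    (forall k i, a k i <= b k i) /\
    N `<=` \bigcup_k [set x | forall i, a k i <= x i <= b k i] /\
    (forall m, \sum_(k < m) \prod_(i < n) (b k i - a k i) <= eps).

Definition random_pair_selection {R : realType} (d : measure_display)
    (T : measurableType d) (P : probability T R) n (e : nat -> T -> edge n) :=
  [/\ (forall t a, measurable (e t @^-1` [set a])),
      (forall t a, P (e t @^-1` [set a]) = ((#|{: edge n}|%:R)^-1)%:E) &
      (forall (s : seq nat) (a : nat -> edge n), uniq s ->
         P (\bigcap_(t in [set t | t \in s]) (e t @^-1` [set a t])) =
         (\prod_(t <- s) P (e t @^-1` [set a t]))%E)].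

(* Main.v *)
Require Import Defs.
From HB Require Import structures.
From mathcomp Require Import all_boot all_order all_algebra.
From mathcomp Require Import all_classical all_reals all_analysis.
From mathcomp Require Import ring lra.
Import Order.TTheory GRing.Theory Num.Theory.
Import numFieldNormedType.Exports.
Local Open Scope classical_set_scope.
Local Open Scope ring_scope.
Set Implicit Arguments. Unset Strict Implicit. Unset Printing Implicit Defensive.

Ltac fcases := rewrite /Fc; repeat (let h := fresh "h" in case: ifP => h;
   [ | move/negbT: h; rewrite -?leNgt -?ltNge => h]).
Ltac splitlra := repeat (apply/andP; split); lra.
Ltac eqlra := apply/eqP; rewrite eq_le; apply/andP; split; lra.

Lemma Fc_box (R : realType) (c z : R) : 0 < c -> - c <= Fc c z <= c.
Proof. move=> c0; fcases; splitlra. Qed.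

Lemma Fc_id (R : realType) (c z : R) : - c <= z <= c -> Fc c z = z.
Proof. move=> /andP[h1 h2]; fcases; eqlra. Qed.

Lemma Fc_top (R : realType) (c z : R) : 0 < c -> c <= z -> Fc c z = c.
Proof. move=> c0 h0; fcases; eqlra. Qed.

Lemma Fc_bot (R : realType) (c z : R) : 0 < c -> z <= - c -> Fc c z = - c.
Proof. move=> c0 h0; fcases; eqlra. Qed.

Lemma Fc_ge (R : realType) (c u z : R) : - c <= u <= c -> u <= z -> u <= Fc c z.
Proof. move=> /andP[h1 h2] h0; fcases; lra. Qed.

Lemma Fc_le (R : realType) (c u z : R) : - c <= u <= c -> z <= u -> Fc c z <= u.
Proof. move=> /andP[h1 h2] h0; fcases; lra. Qed.

Lemma Fc_opp (R : realType) (c z : R) : 0 < c -> Fc c (- z) = - Fc c z.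
Proof. move=> c0; fcases; eqlra. Qed.

Lemma Fc_diff (R : realType) (c a b g : R) : 0 < c -> - c <= b -> a <= c -> b <= a -> 0 <= g ->
  Num.min (2 * c) (a - b + g) <= Fc c (a + g) - Fc c (b - g).
Proof.
move=> c0 hb ha hab hg; rewrite ge_min; fcases; apply/orP; (try by left; lra); right; lra.
Qed.

Section Dyn.
Variable R : realType.
Variable n : nat.
Variable pos : rel 'I_n.
Variables V1 V2 : {set 'I_n}.
Variables c alpha beta : R.
Hypothesis c0 : 0 < c.
Hypothesis a0 : 0 < alpha.
Hypothesis a1 : 2 * alpha < 1.
Hypothesis b1 : 1 <= beta.
Hypothesis ab : 1 <= alpha * (1 + beta).
Hypothesis hsym : signed_complete pos.
Hypothesis hbal : structurally_balanced pos V1 V2.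
Variable e0 : edge n.

Ltac glra := have := c0; have := a0; have := a1; have := b1; have := ab;
  generalize dependent c; generalize dependent alpha; generalize dependent beta;
  intros; lra.
Ltac gnra := have := c0; have := a0; have := a1; have := b1; have := ab;
  generalize dependent c; generalize dependent alpha; generalize dependent beta;
  intros; nra.
Ltac geqlra := apply/eqP; rewrite eq_le; apply/andP; split; glra.

Local Notation st := (step pos c alpha beta).
Definition box (x : 'I_n -> R) := forall k, - c <= x k <= c.
Local Notation th := (theta pos alpha beta).

Lemma inV2 k : (k \in V2) = ~~ (k \in V1).
Proof.
case: hbal => [[_ _ hd hc] _]; move: (hd k) (hc k).
by case: (k \in V1); case: (k \in V2).
Qed.

Lemma posE u v : u != v -> pos u v = ((u \in V1) == (v \in V1)).
Proof.
case: hbal => [_ [hn hp]] uv.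
case hu: (u \in V1); case hv: (v \in V1) => /=.
- by apply: hp => //; rewrite hu hv.
- have := hn u v uv hu; rewrite inV2 hv => /(_ isT) [/negbTE -> _] //.
- have := hn v u; rewrite eq_sym inV2 hu => /(_ uv hv isT) [_ /negbTE ->] //.
- by apply: hp => //; rewrite !inV2 hu hv.
Qed.

Lemma th_sym u v : u != v -> th u v = th v u.
Proof. by move=> uv; rewrite /theta hsym. Qed.

Lemma edge_neq (e : edge n) : (val e).1 != (val e).2.
Proof. by case: e => [[a b]] /= h; rewrite neq_ltn h. Qed.

Lemma step_other e x k : k != (val e).1 -> k != (val e).2 -> st e x k = x k.
Proof. by move=> h1 h2; rewrite /step (negbTE h1) (negbTE h2). Qed.

Lemma step_end e x u v : (u, v) = val e \/ (v, u) = val e ->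
  st e x u = Fc c ((1 - th u v) * x u + th u v * x v).
Proof.
have hn := edge_neq e.
case=> h; rewrite /step -h /= eqxx //.
rewrite -h /= in hn. rewrite eq_sym (negbTE hn) th_sym //.
Qed.

Definition mkE (u v : 'I_n) : edge n :=
  odflt e0 (insub (if (u < v)%N then (u, v) else (v, u))).

Lemma mkE_ends u v : u != v -> (u, v) = val (mkE u v) \/ (v, u) = val (mkE u v).
Proof.
move=> uv; rewrite /mkE.
case: ifP => h.
  by rewrite insubT /=; left.
rewrite insubT /=; last by right.
have : (v < u)%N by rewrite ltn_neqAle leqNgt h andbT eq_sym.
by [].
Qed.


Lemma step_mkE_u u v x : u != v -> st (mkE u v) x u = Fc c ((1 - th u v) * x u + th u v * x v).
Proof. by move=> uv; apply: step_end; apply: mkE_ends. Qed.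

Lemma step_mkE_v u v x : u != v -> st (mkE u v) x v = Fc c ((1 - th u v) * x v + th u v * x u).
Proof.
move=> uv; rewrite th_sym //; apply: step_end.
by case: (mkE_ends uv) => h; [right|left].
Qed.

Lemma step_mkE_o u v x k : u != v -> k != u -> k != v -> st (mkE u v) x k = x k.
Proof.
move=> uv ku kv; rewrite /step; case: (mkE_ends uv) => <- /=.
  by rewrite (negbTE ku) (negbTE kv).
by rewrite (negbTE ku) (negbTE kv).
Qed.

Lemma thE u v : u != v -> th u v = if (u \in V1) == (v \in V1) then alpha else - beta.
Proof. by move=> uv; rewrite /theta posE. Qed.


Lemma step_box e x : box x -> box (st e x).
Proof.
move=> bx k; rewrite /step; case: ifP => _; first exact: Fc_box.
case: ifP => _; [exact: Fc_box | exact: bx].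
Qed.

Definition osc (x : 'I_n -> R) := \big[Num.max/0]_(p : 'I_n * 'I_n) `|x p.1 - x p.2|.

Lemma osc_ge x i j : x i - x j <= osc x.
Proof.
apply: le_trans (ler_norm _) _.
exact: (le_bigmax 0 (fun p : 'I_n * 'I_n => `|x p.1 - x p.2|) (i, j)).
Qed.

Lemma osc_ge0 x : 0 <= osc x.
Proof.
case: hbal => [[[i _] _ _ _] _].
by have := osc_ge x i i; rewrite subrr.
Qed.

Lemma osc_att x : exists i j, osc x = x i - x j.
Proof.
case: hbal => [[[i _] _ _ _] _]; rewrite /osc.
have [p _ ->] := eq_bigmax (i, i) xpredT (fun p : 'I_n * 'I_n => `|x p.1 - x p.2|) isT
  (fun _ _ => normr_ge0 _).
case: (lerP 0 (x p.1 - x p.2)) => h.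
  by exists p.1, p.2; rewrite ger0_norm.
by exists p.2, p.1; rewrite ltr0_norm // opprB.
Qed.

Lemma osc_le x : box x -> osc x <= 2 * c.
Proof.
move=> bx; apply: bigmax_le; first by have := c0; move=> ?; glra.
move=> [i j] _ /=; have := bx i; have := bx j.
move=> /andP[h1 h2] /andP[h3 h4].
rewrite ler_norml; apply/andP; split; glra.
Qed.

Lemma osc_maxmin x p q : osc x = x p - x q -> forall t, x q <= x t <= x p.
Proof.
move=> h t; have := osc_ge x t q; have := osc_ge x p t; rewrite h => h1 h2.
apply/andP; split; lra.
Qed.

Lemma osc_step_pos e x : box x -> pos (val e).1 (val e).2 ->
  (1 - 2 * alpha) * osc x <= osc (st e x).
Proof.
move=> bx hp; have [p [q hpq]] := osc_att x.
have key : forall k, x k - alpha * osc x <= st e x k <= x k + alpha * osc x.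
  move=> k; have hn := edge_neq e.
  have gen : forall u v, (u, v) = val e \/ (v, u) = val e ->
     x u - alpha * osc x <= st e x u <= x u + alpha * osc x.
    move=> u v huv; rewrite (step_end _ huv) /theta.
    have -> : pos u v.
      case: huv => h; move: hp (edge_neq e); rewrite -h /= => hp' hn' //.
      by rewrite hsym; last by rewrite eq_sym.
    have := bx u; have := bx v; move=> /andP[h1 h2] /andP[h3 h4].
    have g1 := osc_ge x u v; have g2 := osc_ge x v u.
    rewrite Fc_id; first by apply/andP; split; gnra.
    by apply/andP; split; gnra.
  case: (eqVneq k (val e).1) => [->|k1]; first by apply: (gen _ (val e).2); left; case: (val e).
  case: (eqVneq k (val e).2) => [->|k2]; first by apply: (gen _ (val e).1); right; case: (val e).
  rewrite step_other //; have := osc_ge0 x => ?; apply/andP; split; gnra.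
have /andP[k1 _] := key p; have /andP[_ k2] := key q.
have := osc_ge (st e x) p q; glra.
Qed.

Lemma osc_step_neg e x : box x -> ~~ pos (val e).1 (val e).2 -> osc x <= osc (st e x).
Proof.
move=> bx hp; have [p [q hpq]] := osc_att x.
have mm := osc_maxmin hpq.
have gen : forall u v, (u, v) = val e \/ (v, u) = val e ->
   (x v <= x u -> x u <= st e x u) /\ (x u <= x v -> st e x u <= x u).
  move=> u v huv; rewrite (step_end _ huv) /theta.
  have -> : pos u v = false.
    apply/negbTE; case: huv => h; move: hp (edge_neq e); rewrite -h /= => hp' hn' //.
    by rewrite hsym; last by rewrite eq_sym.
  have := bx u; have := bx v; move=> /andP[h1 h2] /andP[h3 h4].
  split=> h.
    by apply: Fc_ge; [apply/andP; split | gnra].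
  by apply: Fc_le; [apply/andP; split | gnra].
have E1 : ((val e).1, (val e).2) = val e by case: (val e).
have hP : x p <= st e x p.
  case: (eqVneq p (val e).1) => [hh|k1]; first rewrite hh in mm *.
    by have [g _] := gen _ _ (or_introl E1); apply: g; case/andP: (mm (val e).2).
  case: (eqVneq p (val e).2) => [hh|k2]; first rewrite hh in mm *.
    by have [g _] := gen _ _ (or_intror E1); apply: g; case/andP: (mm (val e).1).
  by rewrite step_other.
have hQ : st e x q <= x q.
  case: (eqVneq q (val e).1) => [hh|k1]; first rewrite hh in mm *.
    by have [_ g] := gen _ _ (or_introl E1); apply: g; case/andP: (mm (val e).2).
  case: (eqVneq q (val e).2) => [hh|k2]; first rewrite hh in mm *.
    by have [_ g] := gen _ _ (or_intror E1); apply: g; case/andP: (mm (val e).1).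
  by rewrite step_other.
have := osc_ge (st e x) p q; rewrite hpq; lra.
Qed.

Lemma osc_step e x : box x -> (1 - 2 * alpha) * osc x <= osc (st e x).
Proof.
move=> bx; case hp: (pos (val e).1 (val e).2); first exact: osc_step_pos.
have := osc_step_neg bx (negbT hp); have := osc_ge0 x; have := a0.
move=> h1 h2 h3; rewrite mulrBl mul1r. 
have : 0 <= 2 * alpha * osc x by apply: mulr_ge0 => //; lra.
lra.
Qed.

Lemma negpair x : exists u v, [/\ u != v, (u \in V1) != (v \in V1), x v <= x u &
   osc x <= 2 * (x u - x v)].
Proof.
have [p [q hpq]] := osc_att x.
have hge := osc_ge0 x.
case: hbal => [[[i1 hi1] [j1 hj1] _ _] _].
have hj1' : (j1 \in V1) = false by apply/negbTE; rewrite -inV2.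
case hd: ((p \in V1) != (q \in V1)).
  exists p, q; split => //.
  - by apply/eqP => pq; move: hd; rewrite pq eqxx.
  - by lra.
  - by lra.
have [r [hr1 hr2]] : exists r, (r \in V1) != (p \in V1) /\ (r \in V1) != (q \in V1).
  move/negbT: hd; rewrite negbK => /eqP hd.
  case hp: (p \in V1).
    by exists j1; rewrite hj1' -hd hp.
  by exists i1; rewrite hi1 -hd hp.
have rp : r != p by apply/eqP => rp; move: hr1; rewrite rp eqxx.
have rq : r != q by apply/eqP => rq; move: hr2; rewrite rq eqxx.
case: (lerP (osc x) (2 * (x p - x r))) => h.
  exists p, r; split => //; first by rewrite eq_sym.
  - by rewrite eq_sym.
  - by lra.
exists r, q; split => //; lra.
Qed.

Lemma greedy x : box x -> exists e,
  Num.min (2 * c) ((1 + beta) / 2 * osc x) <= osc (st e x).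
Proof.
move=> bx; have [u [v [uv hd hvu hosc]]] := negpair x.
exists (mkE u v).
have hth : th u v = - beta by rewrite thE // (negbTE hd).
have := osc_ge (st (mkE u v) x) u v.
rewrite step_mkE_u // step_mkE_v // hth.
have -> : (1 - - beta) * x u + - beta * x v = x u + beta * (x u - x v) by ring.
have -> : (1 - - beta) * x v + - beta * x u = x v - beta * (x u - x v) by ring.
have := bx u; have := bx v; move=> /andP[h1 h2] /andP[h3 h4].
have hg : 0 <= beta * (x u - x v) by apply: mulr_ge0; glra.
have H1 := Fc_diff c0 h1 h4 hvu hg.
move=> H2.
apply: le_trans H2; apply: le_trans H1.
rewrite le_min ge_min lexx /= ge_min; apply/orP; right.
have : (1 + beta) / 2 * osc x <= (1 + beta) / 2 * (2 * (x u - x v)).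
  by apply: ler_wpM2l => //; glra.
have -> : (1 + beta) / 2 * (2 * (x u - x v)) = x u - x v + beta * (x u - x v) by field.
by [].
Qed.

Lemma polarize x : box x -> 4 * c <= beta * osc x -> exists e i0 j0,
  [/\ i0 \in V1, j0 \in V2, box (st e x) &
   (st e x i0 = c /\ st e x j0 = - c) \/ (st e x i0 = - c /\ st e x j0 = c)].
Proof.
move=> bx hb; have [u [v [uv hd hvu hosc]]] := negpair x.
have hth : th u v = - beta by rewrite thE // (negbTE hd).
have := bx u; have := bx v; move=> /andP[h1 h2] /andP[h3 h4].
have hG : 2 * c <= beta * (x u - x v).
  have : beta * osc x <= beta * (2 * (x u - x v)) by apply: ler_wpM2l => //; glra.
  move=> h; have : 4 * c <= 2 * (beta * (x u - x v)) by rewrite mulrCA; lra.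
  lra.
have Hu : st (mkE u v) x u = c.
  rewrite step_mkE_u // hth; apply: Fc_top => //.
  have -> : (1 - - beta) * x u + - beta * x v = x u + beta * (x u - x v) by ring.
  lra.
have Hv : st (mkE u v) x v = - c.
  rewrite step_mkE_v // hth; apply: Fc_bot => //.
  have -> : (1 - - beta) * x v + - beta * x u = x v - beta * (x u - x v) by ring.
  lra.
exists (mkE u v).
case hu: (u \in V1).
  exists u, v; split => //; first by rewrite inV2; move: hd; rewrite hu; case: (v \in V1).
  - exact: step_box.
  - by left.
exists v, u; split => //.
- by move: hd; rewrite hu; case: (v \in V1).
- by rewrite inV2 hu.
- exact: step_box.
- by right.
Qed.

Definition run (w : seq (edge n)) (x : 'I_n -> R) := foldl (fun y e => st e y) x w.

Lemma run_cons e w x : run (e :: w) x = run w (st e x). Proof. by []. Qed.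
Lemma run_cat w1 w2 x : run (w1 ++ w2) x = run w2 (run w1 x).
Proof. by rewrite /run foldl_cat. Qed.
Lemma run_rcons w e x : run (rcons w e) x = st e (run w x).
Proof. by rewrite /run foldl_rcons. Qed.

Lemma run_box w x : box x -> box (run w x).
Proof. elim: w x => [//|e w IH] x bx; rewrite run_cons; apply: IH; exact: step_box. Qed.

Lemma run_osc w x : box x -> (1 - 2 * alpha) ^+ size w * osc x <= osc (run w x).
Proof.
elim: w x => [|e w IH] x bx; first by rewrite /= expr0 mul1r.
rewrite run_cons [size _]/=; apply: le_trans (IH _ (step_box e bx)).
rewrite exprSr -mulrA; apply: ler_wpM2l; first by apply: exprn_ge0; glra.
exact: osc_step.
Qed.

Lemma greedy_run L x : box x -> exists w, size w = L /\
  Num.min (2 * c) (((1 + beta) / 2) ^+ L * osc x) <= osc (run w x).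
Proof.
move=> bx; elim: L => [|L [w [sw hw]]].
  by exists [::]; split => //; rewrite expr0 mul1r ge_min lexx orbT.
have [e he] := greedy (run_box w bx).
exists (rcons w e); split; first by rewrite size_rcons sw.
rewrite run_rcons; apply: le_trans he.
have hr : 1 <= (1 + beta) / 2 by glra.
have hr0 : 0 <= (1 + beta) / 2 by glra.
rewrite exprSr mulrAC [X in Num.min _ X <= _]mulrC.
rewrite le_min ge_min lexx /=.
move: hw; rewrite ge_min => /orP[hw|hw]; rewrite ge_min.
  apply/orP; left; have := osc_ge0 (run w x); move=> h0.
  have : osc (run w x) <= (1 + beta) / 2 * osc (run w x).
    by rewrite -[X in X <= _]mul1r; apply: ler_wpM2r.
  lra.
apply/orP; right; by apply: ler_wpM2l.
Qed.

Definition tgt (k : 'I_n) : R := if k \in V1 then c else - c.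
Definition spb (x : 'I_n -> R) := [forall k, x k == tgt k].
Definition smb (x : 'I_n -> R) := [forall k, x k == - tgt k].
Definition absb x := spb x || smb x.

Lemma st_opp e x : st e (fun k => - x k) = (fun k => - st e x k).
Proof.
apply: funext => k; rewrite /step.
case: ifP => _; first by rewrite -Fc_opp //; congr Fc; ring.
case: ifP => _; first by rewrite -Fc_opp //; congr Fc; ring.
by [].
Qed.

Lemma run_opp w x : run w (fun k => - x k) = (fun k => - run w x k).
Proof. elim: w x => [//|e w IH] x; by rewrite !run_cons st_opp IH. Qed.

Lemma st_sp e x : spb x -> st e x = x.
Proof.
move=> /forallP hx; apply: funext => k.
have gen : forall u v, (u, v) = val e \/ (v, u) = val e -> st e x u = x u.
  move=> u v huv.
  have uv : u != v by case: huv => h; have := edge_neq e; rewrite -h //= eq_sym.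
  rewrite (step_end _ huv) thE // (eqP (hx u)) (eqP (hx v)) /tgt.
  case hu: (u \in V1); case hv: (v \in V1) => /=.
  - by rewrite Fc_id; [ring | apply/andP; split; glra].
  - apply: Fc_top => //; have : 0 <= beta * c by apply: mulr_ge0; glra.
    move=> ?; glra.
  - apply: Fc_bot => //; have : 0 <= beta * c by apply: mulr_ge0; glra.
    move=> ?; glra.
  - by rewrite Fc_id; [ring | apply/andP; split; glra].
have E1 : ((val e).1, (val e).2) = val e by case: (val e).
case: (eqVneq k (val e).1) => [->|k1]; first exact: gen (or_introl E1).
case: (eqVneq k (val e).2) => [->|k2]; first exact: gen (or_intror E1).
by rewrite step_other.
Qed.

Lemma st_sm e x : smb x -> st e x = x.
Proof.
move=> hx.
have hs : spb (fun k => - x k).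
  by apply/forallP => k; move/forallP: hx => /(_ k) /eqP ->; rewrite opprK.
have := st_sp e hs; rewrite st_opp => h.
apply: funext => k; have := congr1 (fun f => f k) h => /= /eqP.
by rewrite eqr_opp => /eqP.
Qed.

Lemma st_abs e x : absb x -> st e x = x.
Proof. by case/orP; [apply: st_sp | apply: st_sm]. Qed.

Lemma run_abs w x : absb x -> run w x = x.
Proof. elim: w => [//|e w IH] hx; by rewrite run_cons st_abs // IH. Qed.

Definition Inv i0 j0 (y : 'I_n -> R) := [/\ y i0 = c, y j0 = - c & box y].

Lemma run3 a b d y : run [:: a; b; d] y = st d (st b (st a y)).
Proof. by []. Qed.

Lemma tripV1 i0 j0 k y : i0 \in V1 -> j0 \in V2 -> k \in V1 -> k != i0 -> Inv i0 j0 y ->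
  let z := run [:: mkE i0 k; mkE k j0; mkE i0 j0] y in
  [/\ z i0 = c, z j0 = - c, z k = c & forall t, t != i0 -> t != j0 -> t != k -> z t = y t].
Proof.
move=> hi hj hk ki [yi yj bY] z.
have ij : i0 != j0 by apply/eqP => h; move: hj; rewrite inV2 -h hi.
have kj : k != j0 by apply/eqP => h; move: hj; rewrite inV2 -h hk.
have ik : i0 != k by rewrite eq_sym.
have ji : j0 != i0 by rewrite eq_sym.
have jk : j0 != k by rewrite eq_sym.
have th1 : th i0 k = alpha by rewrite thE // hi hk.
have th2 : th k j0 = - beta by rewrite thE // hk (negbTE (_ : ~~ (j0 \in V1))) // -inV2.
have th3 : th i0 j0 = - beta by rewrite thE // hi (negbTE (_ : ~~ (j0 \in V1))) // -inV2.
have /andP[yk1 yk2] := bY k.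
set y1 := st (mkE i0 k) y.
have y1i : y1 i0 = (1 - alpha) * c + alpha * y k.
  rewrite /y1 step_mkE_u // th1 yi Fc_id //; apply/andP; split; gnra.
have y1k : y1 k = (1 - alpha) * y k + alpha * c.
  rewrite /y1 step_mkE_v // th1 yi Fc_id //; apply/andP; split; gnra.
have y1o : forall t, t != i0 -> t != k -> y1 t = y t.
  by move=> t h1 h2; rewrite /y1 step_mkE_o.
set y2 := st (mkE k j0) y1.
have y2k : y2 k = c.
  rewrite /y2 step_mkE_u // th2 (y1o j0 ji jk) yj y1k; apply: Fc_top => //.
  have h1 : 0 <= (1 - alpha) * (y k + c) by apply: mulr_ge0; glra.
  have h2 : 0 <= (1 + beta) * ((1 - alpha) * (y k + c)) by apply: mulr_ge0; glra.
  have h3 : 2 * c <= 2 * c * (alpha * (1 + beta)).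
    by rewrite -[X in X <= _]mulr1; apply: ler_wpM2l; glra.
  have -> : (1 - - beta) * ((1 - alpha) * y k + alpha * c) + - beta * - c =
     (1 + beta) * ((1 - alpha) * (y k + c)) + 2 * c * (alpha * (1 + beta)) - c by ring.
  glra.
have y2j : y2 j0 = - c.
  rewrite /y2 step_mkE_v // th2 (y1o j0 ji jk) yj y1k; apply: Fc_bot => //.
  have h1 : 0 <= (1 - alpha) * (y k + c) by apply: mulr_ge0; glra.
  have h2 : 0 <= beta * ((1 - alpha) * (y k + c) + 2 * alpha * c).
    by apply: mulr_ge0; [glra | apply: addr_ge0 => //; apply: mulr_ge0; glra].
  have -> : (1 - - beta) * - c + - beta * ((1 - alpha) * y k + alpha * c) =
     - c - beta * ((1 - alpha) * (y k + c) + 2 * alpha * c) by ring.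
  glra.
have y2i : y2 i0 = (1 - alpha) * c + alpha * y k.
  by rewrite /y2 step_mkE_o // ?y1i // eq_sym.
have y2o : forall t, t != i0 -> t != j0 -> t != k -> y2 t = y t.
  by move=> t h1 h2 h3; rewrite /y2 step_mkE_o // y1o.
have ha : 0 <= alpha * (y k + c) by apply: mulr_ge0; glra.
have zi : z i0 = c.
  rewrite /z run3 -/y1 -/y2 step_mkE_u // th3 y2i y2j; apply: Fc_top => //.
  have -> : (1 - - beta) * ((1 - alpha) * c + alpha * y k) + - beta * - c =
     (1 + beta) * ((1 - 2 * alpha) * c + alpha * (y k + c)) + beta * c by ring.
  have h2 : 0 <= (1 + beta) * ((1 - 2 * alpha) * c + alpha * (y k + c)).
    by apply: mulr_ge0; [glra | apply: addr_ge0 => //; apply: mulr_ge0; glra].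
  have h3 : c <= beta * c by rewrite -[X in X <= _]mul1r; apply: ler_wpM2r; glra.
  glra.
have zj : z j0 = - c.
  rewrite /z run3 -/y1 -/y2 step_mkE_v // th3 y2i y2j; apply: Fc_bot => //.
  have -> : (1 - - beta) * - c + - beta * ((1 - alpha) * c + alpha * y k) =
     - c - beta * ((2 - 2 * alpha) * c + alpha * (y k + c)) by ring.
  have h2 : 0 <= beta * ((2 - 2 * alpha) * c + alpha * (y k + c)).
    by apply: mulr_ge0; [glra | apply: addr_ge0 => //; apply: mulr_ge0; glra].
  glra.
split => //.
- by rewrite /z run3 -/y1 -/y2 step_mkE_o // ?y2k // eq_sym.
- by move=> t h1 h2 h3; rewrite /z run3 -/y1 -/y2 step_mkE_o // y2o.
Qed.

Lemma tripV2 i0 j0 k y : i0 \in V1 -> j0 \in V2 -> k \in V2 -> k != j0 -> Inv i0 j0 y ->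
  let z := run [:: mkE j0 k; mkE i0 k; mkE i0 j0] y in
  [/\ z i0 = c, z j0 = - c, z k = - c & forall t, t != i0 -> t != j0 -> t != k -> z t = y t].
Proof.
move=> hi hj hk kj [yi yj bY] z.
have hj' : (j0 \in V1) = false by apply/negbTE; rewrite -inV2.
have hk' : (k \in V1) = false by apply/negbTE; rewrite -inV2.
have ij : i0 != j0 by apply/eqP => h; move: hj'; rewrite -h hi.
have ki : k != i0 by apply/eqP => h; move: hk'; rewrite h hi.
have ik : i0 != k by rewrite eq_sym.
have ji : j0 != i0 by rewrite eq_sym.
have jk : j0 != k by rewrite eq_sym.
have th1 : th j0 k = alpha by rewrite thE // hj' hk'.
have th2 : th i0 k = - beta by rewrite thE // hi hk'.
have th3 : th i0 j0 = - beta by rewrite thE // hi hj'.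
have /andP[yk1 yk2] := bY k.
set y1 := st (mkE j0 k) y.
have y1j : y1 j0 = (1 - alpha) * - c + alpha * y k.
  rewrite /y1 step_mkE_u // th1 yj Fc_id //; apply/andP; split; gnra.
have y1k : y1 k = (1 - alpha) * y k + alpha * - c.
  rewrite /y1 step_mkE_v // th1 yj Fc_id //; apply/andP; split; gnra.
have y1o : forall t, t != j0 -> t != k -> y1 t = y t.
  by move=> t h1 h2; rewrite /y1 step_mkE_o.
set y2 := st (mkE i0 k) y1.
have y2k : y2 k = - c.
  rewrite /y2 step_mkE_v // th2 (y1o i0 ij ik) yi y1k; apply: Fc_bot => //.
  have h1 : 0 <= (1 - alpha) * (c - y k) by apply: mulr_ge0; glra.
  have h2 : 0 <= (1 + beta) * ((1 - alpha) * (c - y k)) by apply: mulr_ge0; glra.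
  have h3 : 2 * c <= 2 * c * (alpha * (1 + beta)).
    by rewrite -[X in X <= _]mulr1; apply: ler_wpM2l; glra.
  have -> : (1 - - beta) * ((1 - alpha) * y k + alpha * - c) + - beta * c =
     c - (1 + beta) * ((1 - alpha) * (c - y k)) - 2 * c * (alpha * (1 + beta)) by ring.
  glra.
have y2i : y2 i0 = c.
  rewrite /y2 step_mkE_u // th2 (y1o i0 ij ik) yi y1k; apply: Fc_top => //.
  have h1 : 0 <= (1 - alpha) * (c - y k) by apply: mulr_ge0; glra.
  have h2 : 0 <= beta * ((1 - alpha) * (c - y k) + 2 * alpha * c).
    by apply: mulr_ge0; [glra | apply: addr_ge0 => //; apply: mulr_ge0; glra].
  have -> : (1 - - beta) * c + - beta * ((1 - alpha) * y k + alpha * - c) =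
     c + beta * ((1 - alpha) * (c - y k) + 2 * alpha * c) by ring.
  glra.
have y2j : y2 j0 = (1 - alpha) * - c + alpha * y k.
  by rewrite /y2 step_mkE_o.
have y2o : forall t, t != i0 -> t != j0 -> t != k -> y2 t = y t.
  by move=> t h1 h2 h3; rewrite /y2 step_mkE_o // y1o.
have ha : 0 <= alpha * (c - y k) by apply: mulr_ge0; glra.
have zj : z j0 = - c.
  rewrite /z run3 -/y1 -/y2 step_mkE_v // th3 y2i y2j; apply: Fc_bot => //.
  have -> : (1 - - beta) * ((1 - alpha) * - c + alpha * y k) + - beta * c =
     - ((1 + beta) * ((1 - 2 * alpha) * c + alpha * (c - y k))) - beta * c by ring.
  have h2 : 0 <= (1 + beta) * ((1 - 2 * alpha) * c + alpha * (c - y k)).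
    by apply: mulr_ge0; [glra | apply: addr_ge0 => //; apply: mulr_ge0; glra].
  have h3 : c <= beta * c by rewrite -[X in X <= _]mul1r; apply: ler_wpM2r; glra.
  glra.
have zi : z i0 = c.
  rewrite /z run3 -/y1 -/y2 step_mkE_u // th3 y2i y2j; apply: Fc_top => //.
  have -> : (1 - - beta) * c + - beta * ((1 - alpha) * - c + alpha * y k) =
     c + beta * ((2 - 2 * alpha) * c + alpha * (c - y k)) by ring.
  have h2 : 0 <= beta * ((2 - 2 * alpha) * c + alpha * (c - y k)).
    by apply: mulr_ge0; [glra | apply: addr_ge0 => //; apply: mulr_ge0; glra].
  glra.
split => //.
- by rewrite /z run3 -/y1 -/y2 step_mkE_o // ?y2k.
- by move=> t h1 h2 h3; rewrite /z run3 -/y1 -/y2 step_mkE_o // y2o.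
Qed.

Lemma trip0 i0 j0 y : i0 \in V1 -> j0 \in V2 -> Inv i0 j0 y -> st (mkE i0 j0) y = y.
Proof.
move=> hi hj [yi yj bY].
have hj' : (j0 \in V1) = false by apply/negbTE; rewrite -inV2.
have ij : i0 != j0 by apply/eqP => h; move: hj'; rewrite -h hi.
have th3 : th i0 j0 = - beta by rewrite thE // hi hj'.
have hb : 0 <= beta * c by apply: mulr_ge0; glra.
apply: funext => t.
case: (eqVneq t i0) => [->|ti].
  rewrite step_mkE_u // th3 yi yj Fc_top //; glra.
case: (eqVneq t j0) => [->|tj].
  rewrite step_mkE_v // th3 yi yj Fc_bot //; glra.
by rewrite step_mkE_o.
Qed.

Definition trip i0 j0 (k : 'I_n) : seq (edge n) :=
  if (k == i0) || (k == j0) then [:: mkE i0 j0; mkE i0 j0; mkE i0 j0]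
  else if k \in V1 then [:: mkE i0 k; mkE k j0; mkE i0 j0]
  else [:: mkE j0 k; mkE i0 k; mkE i0 j0].

Lemma trip_ok i0 j0 k y : i0 \in V1 -> j0 \in V2 -> Inv i0 j0 y ->
  let z := run (trip i0 j0 k) y in
  [/\ Inv i0 j0 z, z k = tgt k & forall t, y t = tgt t -> z t = tgt t].
Proof.
move=> hi hj hI z.
have hj' : (j0 \in V1) = false by apply/negbTE; rewrite -inV2.
have bz : box z by apply: run_box; case: hI.
rewrite /z /trip; case: ifP => hk.
  rewrite run3 !trip0 //; case: hI => yi yj bY; split => //.
  by case/orP: hk => /eqP ->; rewrite /tgt ?hi ?hj'.
move/negbT: hk; rewrite negb_or => /andP[ki kj].
case: ifP => hk1.
  have [zi zj zk zo] := tripV1 hi hj hk1 ki hI.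
  split => //; first by split => //; move: bz; rewrite /z /trip (negbTE ki) (negbTE kj) hk1.
  - by rewrite zk /tgt hk1.
  - move=> t ht; case: (eqVneq t i0) => [->|ti]; first by rewrite zi /tgt hi.
    case: (eqVneq t j0) => [->|tj]; first by rewrite zj /tgt hj'.
    case: (eqVneq t k) => [->|tk]; first by rewrite zk /tgt hk1.
    by rewrite zo.
have hk2 : k \in V2 by rewrite inV2 hk1.
have [zi zj zk zo] := tripV2 hi hj hk2 kj hI.
split => //; first by split => //; move: bz; rewrite /z /trip (negbTE ki) (negbTE kj) hk1.
- by rewrite zk /tgt hk1.
- move=> t ht; case: (eqVneq t i0) => [->|ti]; first by rewrite zi /tgt hi.
  case: (eqVneq t j0) => [->|tj]; first by rewrite zj /tgt hj'.
  case: (eqVneq t k) => [->|tk]; first by rewrite zk /tgt hk1.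
  by rewrite zo.
Qed.

Definition W i0 j0 (s : seq 'I_n) := flatten (map (trip i0 j0) s).

Lemma size_W i0 j0 s : size (W i0 j0 s) = (3 * size s)%N.
Proof.
elim: s => [//|k s IH]; rewrite /W /= size_cat -/(W i0 j0 s) IH mulnS.
by rewrite /trip; case: ifP => //; case: ifP.
Qed.

Lemma W_ok i0 j0 s y : i0 \in V1 -> j0 \in V2 -> Inv i0 j0 y ->
  Inv i0 j0 (run (W i0 j0 s) y) /\
  forall t, (t \in s) || (y t == tgt t) -> run (W i0 j0 s) y t = tgt t.
Proof.
move=> hi hj; elim: s y => [|k s IH] y hI.
  by split => // t /= /eqP.
rewrite /W /= run_cat -/(W i0 j0 s).
have [hI' hk hp] := trip_ok k hi hj hI.
have [hI2 hp2] := IH _ hI'; split => // t /orP[|/eqP ht].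
  rewrite inE => /orP[/eqP ->|ts]; apply: hp2; first by rewrite hk eqxx orbT.
  by rewrite ts.
by apply: hp2; rewrite hp // eqxx orbT.
Qed.

Lemma phase2 x : box x -> 4 * c <= beta * osc x ->
  exists w, size w = (3 * n).+1%N /\ absb (run w x).
Proof.
move=> bx hb; have [e [i0 [j0 [hi hj bz hz]]]] := polarize bx hb.
exists (e :: W i0 j0 (enum 'I_n)); split.
  by rewrite /= size_W size_enum_ord.
rewrite run_cons.
case: hz => [[zi zj]|[zi zj]].
  have hI : Inv i0 j0 (st e x) by split.
  have [_ hp] := W_ok (enum 'I_n) hi hj hI.
  apply/orP; left; apply/forallP => t; apply/eqP; apply: hp; by rewrite mem_enum.
have hI : Inv i0 j0 (fun k => - st e x k).
  split; [by rewrite zi opprK | by rewrite zj | move=> k; have := bz k; move=> /andP[? ?]; splitlra].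
have [_ hp] := W_ok (enum 'I_n) hi hj hI.
rewrite run_opp in hp.
apply/orP; right; apply/forallP => t; apply/eqP.
have := hp t; rewrite mem_enum /= => /(_ isT) h.
by rewrite -h opprK.
Qed.

Definition mm : R := #|{: edge n}|%:R.

Lemma mm_gt0 : 0 < mm.
Proof. by rewrite /mm ltr0n; apply/card_gt0P; exists e0. Qed.

Definition A (f : ('I_n -> R) -> R) (x : 'I_n -> R) := mm^-1 * \sum_(e : edge n) f (st e x).

Definition good (y : 'I_n -> R) := box y /\ 0 < osc y.

Lemma good_step e y : good y -> good (st e y).
Proof.
move=> [bY hy]; split; first exact: step_box.
apply: lt_le_trans (osc_step e bY); apply: mulr_gt0 => //; glra.
Qed.

Lemma good_run w y : good y -> good (run w y).
Proof. elim: w y => [//|e w IH] y hy; rewrite run_cons; apply: IH; exact: good_step. Qed.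

Lemma iter_mono t f g : (forall y, good y -> f y <= g y) ->
  forall y, good y -> iter t A f y <= iter t A g y.
Proof.
move=> hfg; elim: t => [//|t IH] y hy /=.
rewrite /A; apply: ler_wpM2l; first by rewrite invr_ge0 ltW // mm_gt0.
apply: ler_sum => e _; apply: IH; exact: good_step.
Qed.

Lemma iter_scale t k f y : iter t A (fun z => k * f z) y = k * iter t A f y.
Proof.
elim: t y => [//|t IH] y /=.
rewrite /A; under eq_bigr => e _ do rewrite IH.
by rewrite -mulr_sumr mulrCA.
Qed.

Lemma iter_block (f : ('I_n -> R) -> R) L x M d :
  (forall w, size w = L -> f (run w x) <= M) ->
  (exists w, size w = L /\ f (run w x) <= d) ->
  iter L A f x <= M - mm^-1 ^+ L * (M - d).
Proof.
elim: L x d => [|L IH] x d hall [w [sw hw]].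
  by move: sw hw => /size0nil -> /= hw; rewrite expr0 mul1r opprB addrCA subrr addr0.
case: w sw hw => [//|e' w'] [sw] hw /=.
have hb : forall e, iter L A f (st e x) <= M - (e == e')%:R * (mm^-1 ^+ L * (M - d)).
  move=> e; case: (eqVneq e e') => [->|ne]; rewrite ?mul1r ?mul0r ?subr0.
    apply: IH; first by move=> v sv; apply: (hall (e' :: v)); rewrite /= sv.
    by exists w'; split.
  have := IH (st e x) M; rewrite subrr mulr0 subr0; apply.
    by move=> v sv; apply: (hall (e :: v)); rewrite /= sv.
  exists (nseq L e0); split; first by rewrite size_nseq.
  by apply: (hall (e :: nseq L e0)); rewrite /= size_nseq.
rewrite /A; apply: (@le_trans _ _ (mm^-1 * \sum_(e : edge n) (M - (e == e')%:R * (mm^-1 ^+ L * (M - d))))).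
  by apply: ler_wpM2l; [rewrite invr_ge0 ltW // mm_gt0 | apply: ler_sum => e _; apply: hb].
rewrite sumrB sumr_const -mulr_suml.
rewrite (bigD1 e') //= eqxx big1 ?addr0; last by move=> e /negbTE ->.
have hm : mm != 0 by rewrite gt_eqF // mm_gt0.
rewrite (_ : M *+ _ = M * mm); last by rewrite /mm mulr_natr.
rewrite exprS -mulrA; set K := mm^-1 ^+ L * (M - d).
have -> : mm^-1 * (M * mm - true%:R * K) = M - mm^-1 * K by rewrite /=; field.
by [].
Qed.
Lemma div_le (a b b' : R) : 0 <= a -> 0 < b' -> b' <= b -> a / b <= a / b'.
Proof.
move=> ha hb' hbb; apply: ler_wpM2l => //.
by rewrite lef_pV2 ?posrE // (lt_le_trans hb' hbb).
Qed.

Lemma powR_mono (s a b : R) : 0 <= s -> 0 <= a -> a <= b -> a `^ s <= b `^ s.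
Proof.
move=> hs ha hab; apply: (ge0_ler_powR hs); rewrite ?nnegrE //; exact: le_trans hab.
Qed.

Definition LL := (3 * n).+1%N.

Definition U (s : R) (x : 'I_n -> R) := if absb x then 0 else (2 * c / osc x) `^ s.

Lemma U_ge0 s x : 0 <= U s x.
Proof. by rewrite /U; case: ifP => _ //; apply: powR_ge0. Qed.

Lemma U_block s x : 0 < s -> ((1 - 2 * alpha)^-1 ^+ LL) `^ s <= 1 + mm^-1 ^+ LL / 2 ->
  2 <= (beta / 2) `^ s -> good x ->
  iter LL A (U s) x <= (1 - (mm^-1 ^+ LL) ^+ 2 / 2) * U s x.
Proof.
move=> s0 hQ hB [bx ox].
set p := mm^-1 ^+ LL; set Q := (1 - 2 * alpha)^-1 ^+ LL.
have hm1 : 1 <= mm by rewrite /mm ler1n; apply/card_gt0P; exists e0.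
have p0 : 0 <= p by rewrite /p exprn_ge0 // invr_ge0 ltW // mm_gt0.
have p1 : p <= 1.
  by apply: exprn_ile1; [rewrite invr_ge0 ltW // mm_gt0 | rewrite invf_le1 // mm_gt0].
have q0 : 0 < 1 - 2 * alpha by glra.
have Q0 : 0 <= Q by rewrite /Q exprn_ge0 // invr_ge0 ltW.
case hx: (absb x).
  rewrite /U hx mulr0.
  have := @iter_block (U s) LL x 0 0.
  rewrite subrr mulr0 subr0; apply.
    by move=> w _; rewrite run_abs // /U hx.
  by exists (nseq LL e0); rewrite size_nseq run_abs // /U hx.
rewrite /U hx -/(U s x).
set u := (2 * c / osc x) `^ s.
have u0 : 0 <= u by apply: powR_ge0.
have hall : forall w, size w = LL -> U s (run w x) <= Q `^ s * u.
  move=> w sw; rewrite /U; case: ifP => _; first by apply: mulr_ge0 => //; apply: powR_ge0.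
  have [_ ow] := good_run w (conj bx ox).
  have ho := run_osc w bx; rewrite sw in ho.
  rewrite /u -powRM //; last by apply: divr_ge0; [glra | exact: ltW].
  apply: powR_mono; [exact: ltW | apply: divr_ge0; [glra | exact: ltW] |].
  have H1 : 2 * c / osc (run w x) <= 2 * c / ((1 - 2 * alpha) ^+ LL * osc x).
    by apply: div_le => //; [glra | apply: mulr_gt0 => //; exact: exprn_gt0].
  apply: le_trans H1 _.
  rewrite /Q exprVn le_eqVlt; apply/orP; left; apply/eqP; field.
  by apply/andP; split; [rewrite gt_eqF | rewrite expf_neq0 // gt_eqF].
have fin : forall d, 0 <= d -> d <= u / 2 -> Q `^ s * u - p * (Q `^ s * u - d) <= (1 - p ^+ 2 / 2) * u.
  move=> d d0 du.
  have h1 : 0 <= (1 - p) * u by apply: mulr_ge0 => //; lra.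
  have h2 : (1 - p) * u * Q `^ s <= (1 - p) * u * (1 + p / 2) by apply: ler_wpM2l.
  have h3 : 0 <= p * u by apply: mulr_ge0.
  have h4 : p * d <= p * (u / 2) by apply: ler_wpM2l.
  have -> : Q `^ s * u - p * (Q `^ s * u - d) = (1 - p) * u * Q `^ s + p * d by ring.
  have -> : (1 - p ^+ 2 / 2) * u = (1 - p) * u * (1 + p / 2) + p * (u / 2) by field.
  lra.
change (iter LL A (U s) x <= (1 - p ^+ 2 / 2) * u).
have hr1 : 1 <= (1 + beta) / 2 by glra.
case: (lerP (4 * c) (beta * osc x)) => hb.
  have [w [sw hw]] := phase2 bx hb.
  apply: le_trans (fin 0 (lexx 0) _); last by apply: divr_ge0.
  have := @iter_block (U s) LL x (Q `^ s * u) 0 hall; rewrite subr0; apply.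
  by exists w; split => //; rewrite /U hw.
have [w [sw hw]] := greedy_run LL bx.
have hw2 : U s (run w x) <= u / 2.
  have hbeta : beta / 2 <= 2 * c / osc x.
    by rewrite ler_pdivlMr //; lra.
  have hu2 : 2 <= u.
    by apply: le_trans hB (powR_mono (ltW s0) _ hbeta); glra.
  rewrite /U; case: ifP => _; first by apply: divr_ge0 => //.
  have [_ ow] := good_run w (conj bx ox).
  move: hw; rewrite ge_min => /orP[h|h].
    have h1 : 2 * c / osc (run w x) <= 1 by rewrite ler_pdivrMr // mul1r.
    have h0 : 0 <= 2 * c / osc (run w x) by apply: divr_ge0; [glra | exact: ltW].
    have := powR_mono (ltW s0) h0 h1; rewrite powR1 => h2; lra.
  set r := (1 + beta) / 2 in h hr1 *.
  have rL : 0 < r ^+ LL by apply: exprn_gt0; lra.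
  set v := 2 * c / (r ^+ LL * osc x).
  have v0 : 0 <= v by apply: divr_ge0; [glra | apply: ltW; exact: mulr_gt0].
  have h1 : 2 * c / osc (run w x) <= v by apply: div_le => //; [glra | exact: mulr_gt0].
  have h0 : 0 <= 2 * c / osc (run w x) by apply: divr_ge0; [glra | exact: ltW].
  have h2 := powR_mono (ltW s0) h0 h1.
  have hu : u = (r ^+ LL) `^ s * v `^ s.
    rewrite /u -powRM; [congr powR | exact: ltW | by []].
    by rewrite /v; field; apply/andP; split; rewrite gt_eqF.
  have hrb : beta / 2 <= r ^+ LL.
    apply: le_trans (ler_eXnr _ hr1) => //; rewrite /r; glra.
  have h3 : 2 <= (r ^+ LL) `^ s by apply: le_trans hB (powR_mono (ltW s0) _ hrb); glra.
  have h4 : 0 <= v `^ s by apply: powR_ge0.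
  have : 2 * v `^ s <= (r ^+ LL) `^ s * v `^ s by apply: ler_wpM2r.
  rewrite -hu => h5.
  lra.
apply: le_trans (fin (U s (run w x)) (U_ge0 _ _) hw2).
apply: iter_block => //; by exists w.
Qed.

Definition rho := 1 - (mm^-1 ^+ LL) ^+ 2 / 2.

Lemma rho_ge0 : 0 <= rho.
Proof.
have p0 : 0 <= mm^-1 ^+ LL by rewrite exprn_ge0 // invr_ge0 ltW // mm_gt0.
have hm1 : 1 <= mm by rewrite /mm ler1n; apply/card_gt0P; exists e0.
have p1 : mm^-1 ^+ LL <= 1.
  by apply: exprn_ile1; [rewrite invr_ge0 ltW // mm_gt0 | rewrite invf_le1 // mm_gt0].
rewrite /rho; set p := mm^-1 ^+ LL in p0 p1 *.
have : p ^+ 2 <= 1 by rewrite expr2; nra.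
lra.
Qed.

Lemma U_iter s k x : 0 < s -> ((1 - 2 * alpha)^-1 ^+ LL) `^ s <= 1 + mm^-1 ^+ LL / 2 ->
  2 <= (beta / 2) `^ s -> good x ->
  iter (k * LL) A (U s) x <= rho ^+ k * U s x.
Proof.
move=> s0 hQ hB; elim: k x => [|k IH] x gx; first by rewrite mul0n expr0 mul1r.
rewrite mulSn iterD.
apply: le_trans (iter_mono (g := fun y => rho ^+ k * U s y) LL IH gx) _.
rewrite iter_scale exprSr -mulrA.
apply: ler_wpM2l; first exact: exprn_ge0 rho_ge0.
exact: U_block.
Qed.

Definition badind (y : 'I_n -> R) : R := (~~ absb y)%:R.

Lemma badind_le s y : 0 <= s -> good y -> badind y <= U s y.
Proof.
move=> s0 [bY oy]; rewrite /badind /U; case: (absb y) => //=.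
have h : 1 <= 2 * c / osc y by rewrite ler_pdivlMr // mul1r; apply: osc_le.
have H := @ler_powR _ _ h 0 s s0; rewrite powRr0 in H.
by apply: le_trans H.
Qed.

Fixpoint words (t : nat) : seq (seq (edge n)) :=
  if t is t'.+1 then [seq e :: w | e <- index_enum (edge n), w <- words t'] else [:: [::]].

Lemma words_size t w : w \in words t -> size w = t.
Proof.
elim: t w => [|t IH] w /=; first by rewrite inE => /eqP ->.
by case/allpairsP => [[e w'] [_ /IH hw ->]] /=; rewrite hw.
Qed.

Lemma words_all t w : size w = t -> w \in words t.
Proof.
elim: t w => [|t IH] [|e w] //= [sw].
by apply/allpairsP; exists (e, w); split => //=; [rewrite mem_index_enum | exact: IH].
Qed.

Lemma iter_words f t x : iter t A f x = mm^-1 ^+ t * \sum_(w <- words t) f (run w x).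
Proof.
elim: t x => [|t IH] x /=; first by rewrite big_seq1 expr0 mul1r.
rewrite big_allpairs_dep /A exprS -mulrA; congr (_ * _).
rewrite mulr_sumr; apply: eq_bigr => e _; by rewrite IH.
Qed.
Variables (d : measure_display) (T : measurableType d) (P : probability T R).
Variable ee : nat -> T -> edge n.
Hypothesis hrp : random_pair_selection P ee.
Variable x0 : 'I_n -> R.

Lemma traj_run (es : nat -> edge n) t :
  traj pos c alpha beta es x0 t = run (mkseq es t) x0.
Proof. by elim: t => [//|t IH]; rewrite mkseqS run_rcons -IH. Qed.

Definition pref (om : T) t := mkseq (fun k => ee k om) t.

Definition Cyl (w : seq (edge n)) : set T :=
  \bigcap_(k in [set k | k \in iota 0 (size w)]) (ee k @^-1` [set nth e0 w k]).

Lemma Cyl_meas w : measurable (Cyl w).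
Proof.
case: hrp => hm _ _; apply: bigcap_measurableType => k _; exact: hm.
Qed.

Lemma prod_cst_seq (I : Type) (s : seq I) (x : R) : \prod_(i <- s) x = x ^+ size s.
Proof. elim: s => [|a s IH]; by rewrite ?big_nil ?big_cons ?IH ?exprS. Qed.

Lemma P_Cyl w : P (Cyl w) = ((mm^-1) ^+ size w)%:E.
Proof.
case: hrp => _ hu hi.
rewrite /Cyl (hi (iota 0 (size w)) (fun k => nth e0 w k) (iota_uniq 0 _)).
under eq_bigr => k _ do rewrite hu.
by rewrite prodEFin prod_cst_seq size_iota.
Qed.

Lemma in_Cyl om w : Cyl w om <-> pref om (size w) = w.
Proof.
split.
  move=> h; apply: (@eq_from_nth _ e0); first by rewrite size_mkseq.
  move=> i; rewrite size_mkseq => hi; rewrite nth_mkseq //.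
  by apply: h; rewrite /= mem_iota add0n hi.
move=> h k; rewrite /= mem_iota add0n => hk.
by rewrite /preimage /= -[in RHS]h nth_mkseq.
Qed.

Lemma mem_bigsetU (I : eqType) (s : seq I) (Pr : pred I) (F : I -> set T) om :
  (\big[setU/set0]_(i <- s | Pr i) F i) om <-> exists i, [/\ i \in s, Pr i & F i om].
Proof.
elim: s => [|a s IH]; first by rewrite big_nil; split => // [[i []]].
rewrite big_cons; case: ifP => ha.
  split.
    case=> [h|/IH [i [hi1 hi2 hi3]]]; first by exists a; rewrite mem_head.
    by exists i; rewrite inE hi1 orbT.
  move=> [i []]; rewrite inE => /orP[/eqP ->|hi] hp hf; first by left.
  by right; apply/IH; exists i.
rewrite IH; split; move=> [i [hi1 hi2 hi3]]; exists i => //; split => //.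
  by rewrite inE hi1 orbT.
move: hi1; rewrite inE => /orP[/eqP hia|//].
by move: hi2; rewrite hia ha.
Qed.

Lemma measU_le (I : eqType) (s : seq I) (Pr : pred I) (F : I -> set T) :
  (forall i, measurable (F i)) ->
  (P (\big[setU/set0]_(i <- s | Pr i) F i) <= \sum_(i <- s | Pr i) P (F i))%E.
Proof.
move=> hm; elim: s => [|a s IH]; first by rewrite !big_nil measure0.
rewrite !big_cons; case: ifP => // _.
apply: le_trans (measureU2 _ (hm a) (bigsetU_measurable _ _)) _ => //.
exact: leeD2l.
Qed.

Definition Ev (Q : pred ('I_n -> R)) t : set T := [set om | Q (run (pref om t) x0)].

Lemma Ev_eq Q t : Ev Q t = \big[setU/set0]_(w <- words t | Q (run w x0)) Cyl w.
Proof.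
apply/seteqP; split => om.
  rewrite /Ev /= => hq; apply/mem_bigsetU; exists (pref om t); split => //.
    by apply: words_all; rewrite size_mkseq.
  by apply/in_Cyl; rewrite size_mkseq.
move/mem_bigsetU => [w [hw hq /in_Cyl hc]].
by rewrite /Ev /= -(words_size hw) hc.
Qed.

Lemma Ev_meas Q t : measurable (Ev Q t).
Proof. rewrite Ev_eq; apply: bigsetU_measurable => w _; exact: Cyl_meas. Qed.

Lemma P_Ev Q t : (P (Ev Q t) <= (mm^-1 ^+ t * \sum_(w <- words t) (Q (run w x0))%:R)%:E)%E.
Proof.
rewrite Ev_eq; apply: le_trans (measU_le _ _ Cyl_meas) _.
rewrite big_seq_cond (eq_bigr (fun _ => (mm^-1 ^+ t)%:E)); last first.
  by move=> w /andP[hw _]; rewrite P_Cyl (words_size hw).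
rewrite -big_seq_cond sumEFin lee_fin mulr_sumr big_mkcond /=.
apply: ler_sum => w _; case: (Q _); by rewrite ?mulr1 ?mulr0.
Qed.

Lemma P_bad_small s k : 0 < s -> ((1 - 2 * alpha)^-1 ^+ LL) `^ s <= 1 + mm^-1 ^+ LL / 2 ->
  2 <= (beta / 2) `^ s -> good x0 ->
  (P (Ev (fun y => ~~ absb y) (k * LL)) <= (rho ^+ k * U s x0)%:E)%E.
Proof.
move=> s0 hQ hB gx; apply: le_trans (P_Ev _ _) _; rewrite lee_fin.
have -> : mm^-1 ^+ (k * LL) * \sum_(w <- words (k * LL)) (~~ absb (run w x0))%:R =
   iter (k * LL) A badind x0 by rewrite iter_words.
apply: le_trans (U_iter k s0 hQ hB gx).
apply: iter_mono => // y gy; exact: badind_le (ltW s0) gy.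
Qed.

Lemma rho_lt1 : rho < 1.
Proof.
have p0 : 0 < mm^-1 ^+ LL by rewrite exprn_gt0 // invr_gt0 mm_gt0.
rewrite /rho; have : 0 < (mm^-1 ^+ LL) ^+ 2 by apply: exprn_gt0.
lra.
Qed.

Definition Nbad : set T := \bigcap_(t in [set: nat]) Ev (fun y => ~~ absb y) t.

Lemma Nbad_meas : measurable Nbad.
Proof. apply: bigcap_measurableType => t _; exact: Ev_meas. Qed.

Lemma P_Nbad s : 0 < s -> ((1 - 2 * alpha)^-1 ^+ LL) `^ s <= 1 + mm^-1 ^+ LL / 2 ->
  2 <= (beta / 2) `^ s -> good x0 -> P Nbad = 0%E.
Proof.
move=> s0 hQ hB gx.
have key : forall k, (P Nbad <= (rho ^+ k * U s x0)%:E)%E.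
  move=> k; apply: le_trans (P_bad_small k s0 hQ hB gx).
  apply: le_measure; rewrite ?inE; [exact: Nbad_meas | exact: Ev_meas |].
  by move=> om hn; apply: hn.
apply/eqP; rewrite eq_le measure_ge0 andbT.
have hfin : P Nbad \is a fin_num.
  rewrite ge0_fin_numE ?measure_ge0 //.
  by apply: (le_lt_trans (probability_le1 _ Nbad_meas)); rewrite ltry.
rewrite -(fineK hfin); rewrite -(fineK hfin) in key; set r := fine (P Nbad) in key *.
rewrite lee_fin; case: (lerP r 0) => // r0.
have U0 := U_ge0 s x0.
have hz : `|rho| < 1 by rewrite ger0_norm ?rho_ge0 // rho_lt1.
have e0' : 0 < r / (U s x0 + 1) by apply: divr_gt0 => //; lra.
have := @cvgr0_norm_lt _ _ _ _ _ _ (cvg_expr hz) _ e0'.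
case=> N _ hN; have := hN N (leqnn N); rewrite /= ger0_norm ?exprn_ge0 ?rho_ge0 // => hk.
have := key N; rewrite lee_fin => hk2.
have : rho ^+ N * (U s x0 + 1) < r by rewrite -ltr_pdivlMr //; lra.
have : 0 <= rho ^+ N by apply: exprn_ge0 rho_ge0.
nra.
Qed.

Definition trw (om : T) t := traj pos c alpha beta (fun t => ee t om) x0 t.

Lemma trw_S om t : trw om t.+1 = st (ee t om) (trw om t).
Proof. by []. Qed.

Lemma trw_stable om t0 : absb (trw om t0) -> forall t, (t0 <= t)%N -> trw om t = trw om t0.
Proof.
move=> ha t /subnKC <-; elim: (t - t0)%N => [|k IH]; first by rewrite addn0.
by rewrite addnS trw_S IH st_abs.
Qed.

Definition Gp : set T := \bigcup_(t in [set: nat]) Ev spb t.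

Definition lfun (om : T) : R := if `[< Gp om >] then c else - c.

Lemma main_prob s : 0 < s -> ((1 - 2 * alpha)^-1 ^+ LL) `^ s <= 1 + mm^-1 ^+ LL / 2 ->
  2 <= (beta / 2) `^ s -> good x0 ->
  exists l : T -> R,
    measurable_fun setT l /\ (forall w, l w = c \/ l w = - c) /\
    {ae P, forall w,
       (forall i, i \in V1 ->
          (fun t => traj pos c alpha beta (fun t => ee t w) x0 t i) @ \oo --> l w) /\
       (forall i, i \in V2 ->
          (fun t => traj pos c alpha beta (fun t => ee t w) x0 t i) @ \oo --> - l w)}.
Proof.
move=> s0 hQ hB gx; exists lfun; split; [|split].
- apply: measurable_fun_ifT; [|exact: measurable_cst|exact: measurable_cst].
  apply: (measurable_fun_bool true).
  have -> : [set: T] `&` (fun om => `[< Gp om >]) @^-1` [set true] = Gp.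
    apply/seteqP; split => om /=.
      by move=> [_ /asboolP].
    by move=> h; split => //; apply/asboolP.
  by apply: bigcup_measurable => t _; apply: Ev_meas.
- by move=> om; rewrite /lfun; case: ifP => _; [left|right].
exists Nbad; split; [exact: Nbad_meas | exact: P_Nbad s0 hQ hB gx |].
move=> om /= Hnot; case: (pselect (Nbad om)) => // hn; exfalso; apply: Hnot.
have [t0 ht0] : exists t0, absb (trw om t0).
  case: (pselect (exists t0, absb (trw om t0))) => // hno; exfalso; apply: hn.
  move=> t _; rewrite /Ev /= -traj_run -/(trw om t); apply/negP => h.
  by apply: hno; exists t.
have hst := trw_stable ht0.
have near_cst : forall (i : 'I_n) (v : R), trw om t0 i = v ->
    (fun t => traj pos c alpha beta (fun t => ee t om) x0 t i) @ \oo --> v.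
  move=> i v hv; apply: cvg_near_cst; exists t0 => // t /= ht.
  by rewrite -/(trw om t) hst // hv.
case hsp: (spb (trw om t0)).
  have hl : lfun om = c.
    rewrite /lfun; case: ifP => // /negP []; apply/asboolP.
    by exists t0 => //; rewrite /Ev /= -traj_run.
  move/forallP: hsp => hsp.
  split => i hi; apply: near_cst; rewrite hl (eqP (hsp i)) /tgt.
    by rewrite hi.
  by move: hi; rewrite inV2 => /negbTE ->.
have hsm : smb (trw om t0) by move: ht0; rewrite /absb hsp.
have hl : lfun om = - c.
  rewrite /lfun; case: ifP => // /asboolP [t _]; rewrite /Ev /= -traj_run -/(trw om t) => ht.
  have : trw om (maxn t t0) = trw om t by apply: (trw_stable (t0 := t)); [rewrite /absb ht | exact: leq_maxl].
  rewrite hst ?leq_maxr // => e; move: hsp; rewrite e ht.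
  by [].
move/forallP: hsm => hsm.
split => i hi; apply: near_cst; rewrite hl (eqP (hsm i)) /tgt.
  by rewrite hi.
by move: hi; rewrite inV2 => /negbTE ->; rewrite opprK.
Qed.

End Dyn.

Lemma diag_null (R : realType) (n : nat) (c : R) : 0 < c -> (1 < n)%N ->
  lebesgue_null [set x : 'I_n -> R | (forall k, - c <= x k <= c) /\ (forall i j, x i = x j)].
Proof.
move=> c0 n2 eps e0.
set K1 := Num.trunc ((2 * c) ^+ n / eps).
set K := K1.+1.
have K0 : (0 < K)%N by [].
have KR : 0 < K%:R :> R by rewrite ltr0n.
set h := 2 * c / K%:R.
have h0 : 0 < h by apply: divr_gt0 => //; lra.
have hK : K%:R * h = 2 * c by rewrite /h mulrC divfK // gt_eqF.
exists (fun k _ => if (k < K)%N then - c + k%:R * h else 0),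
       (fun k _ => if (k < K)%N then - c + k.+1%:R * h else 0).
split; [|split].
- move=> k i /=; case: ifP => // _; rewrite -natr1 mulrDl mul1r; lra.
- move=> x [hb he].
  have i0 : 'I_n := Ordinal (ltnW n2).
  set v := x i0.
  have /andP[v1 v2] := hb i0; rewrite -/v in v1 v2.
  set t := (v + c) / h.
  have t0 : 0 <= t by apply: divr_ge0; lra.
  have th : t * h = v + c by rewrite /t divfK // gt_eqF.
  exists (minn (Num.trunc t) K1) => //.
  have kK : (minn (Num.trunc t) K1 < K)%N.
    exact: leq_ltn_trans (geq_minr _ _) _.
  move=> i /=; rewrite (he i i0) -/v kK.
  case: (leqP (Num.trunc t) K1) => hk.
    have /andP[t1 t2] := truncn_itv t0.
    have h2 : t * h < (Num.trunc t).+1%:R * h by rewrite ltr_pM2r.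
    have := ler_wpM2r (ltW h0) t1; rewrite th in h2 * => h1.
    apply/andP; split; lra.

  have : K%:R <= t by by rewrite -truncn_ge_nat.
  move=> /(ler_wpM2r (ltW h0)); rewrite th hK => hv.
  have hvc : v = c by lra.
  have hKm : K1%:R * h <= K%:R * h by apply: ler_wpM2r; [lra | rewrite ler_nat].
  have hK2 : K1.+1%:R * h = 2 * c := hK.
  apply/andP; split; lra.
- move=> m.
  have hprod : forall k, \prod_(i < n) ((if (k < K)%N then - c + k.+1%:R * h else 0) -
                                       (if (k < K)%N then - c + k%:R * h else 0)) =
                        if (k < K)%N then h ^+ n else 0.
    move=> k; case: ifP => _.
      rewrite prodr_const card_ord; congr (_ ^+ _); rewrite -natr1 mulrDl mul1r; ring.
    by rewrite subrr prodr_const card_ord expr0n gtn_eqF // ltnW.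
  under eq_bigr => k _ do rewrite hprod.
  have hsum : forall m, \sum_(k < m) (if (k < K)%N then h ^+ n else 0) = (minn m K)%:R * h ^+ n.
    elim=> [|j IH]; first by rewrite big_ord0 min0n mul0r.
    rewrite big_ord_recr /= IH.
    case: (ltnP j K) => hj.
      by rewrite (minn_idPl hj) -natr1 mulrDl mul1r.
    by rewrite addr0 (minn_idPr (leqW hj)).
  rewrite hsum.
  set C := (2 * c) ^+ n.
  have C0 : 0 <= C by apply: exprn_ge0; lra.
  have hn : h ^+ n = C / K%:R ^+ n by rewrite /h expr_div_n.
  have hm : (minn m K)%:R * h ^+ n <= K%:R * h ^+ n.
    by apply: ler_wpM2r; [apply: exprn_ge0; lra | rewrite ler_nat geq_minr].
  apply: le_trans hm _.
  have KK : K%:R * K%:R <= K%:R ^+ n :> R.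
    rewrite -(subnKC n2) exprS exprS mulrA -[X in X <= _]mulr1.
    by apply: ler_wpM2l; [apply: mulr_ge0; lra | apply: exprn_ege1; rewrite ler1n].
  have h1 : K%:R * h ^+ n <= C / K%:R.
    rewrite hn mulrCA.
    have : C * K%:R / K%:R ^+ n <= C * K%:R / (K%:R * K%:R).
      apply: ler_wpM2l; first by apply: mulr_ge0; lra.
      by rewrite lef_pV2 ?posrE ?exprn_gt0 ?mulr_gt0.
    have -> : C * K%:R / (K%:R * K%:R) = C / K%:R by field; rewrite gt_eqF.
    by rewrite mulrA.
  apply: le_trans h1 _.
  rewrite ler_pdivrMr //.
  have := truncnS_gt (C / eps); rewrite -/K1 -/K ltr_pdivrMr // => h2.
  rewrite mulrC; lra.
Qed.

Unset Implicit Arguments.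

Theorem theorem4p3 (R : realType) (n : nat) (c alpha : R)
    (pos : rel 'I_n) (V1 V2 : {set 'I_n})
    (d : measure_display) (T : measurableType d) (P : probability T R)
    (e : nat -> T -> edge n) :
  0 < c -> 0 < alpha < 1 / 2 ->
  signed_complete pos -> structurally_balanced pos V1 V2 ->
  random_pair_selection P e ->
  exists beta0 : R, 0 < beta0 /\
    forall beta : R, beta0 < beta ->
    exists N : set ('I_n -> R), lebesgue_null N /\
      forall x0 : 'I_n -> R, (forall i, - c <= x0 i <= c) -> ~ N x0 ->
      exists l : T -> R,
        measurable_fun setT l /\ (forall w, l w = c \/ l w = - c) /\
        {ae P, forall w,
           (forall i, i \in V1 ->
              (fun t => traj pos c alpha beta (fun t => e t w) x0 t i) @ \oo --> l w) /\
           (forall i, i \in V2 ->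
              (fun t => traj pos c alpha beta (fun t => e t w) x0 t i) @ \oo --> - l w)}.
Proof.
move=> c0 /andP[a0 ah] hsym hbal hrp.
have a1 : 2 * alpha < 1 by lra.
have hbal' := hbal.
case: hbal' => [[[i1 hi1] [j1 hj1] hdis _] _].
have n2 : (1 < n)%N.
  have ij : i1 != j1.
    by apply/eqP => h; have := hdis i1; rewrite hi1 h hj1.
  rewrite ltnNge; apply/negP => hn.
  have := leq_trans (ltn_ord i1) hn; have := leq_trans (ltn_ord j1) hn.
  rewrite !ltnS !leqn0 => /eqP hj /eqP hi.
  by move/eqP: ij; apply; apply: ord_inj; rewrite hi hj.
have e0 : edge n := exist _ (Ordinal (ltnW n2), Ordinal n2) (ltn0Sn 0).
set p := (mm R n)^-1 ^+ LL n.
set Q := (1 - 2 * alpha)^-1 ^+ LL n.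
have mm0 : 0 < mm R n by rewrite /mm ltr0n; apply/card_gt0P; exists e0.
have p0 : 0 < p by rewrite exprn_gt0 // invr_gt0.
have Q1 : 1 < Q.
  by rewrite /Q exprn_egt1 // invf_gt1; lra.
have lQ : 0 < ln Q by apply: ln_gt0.
set s := ln (1 + p / 2) / ln Q.
have s0 : 0 < s by apply: divr_gt0 => //; apply: ln_gt0; lra.
have hQ : Q `^ s <= 1 + p / 2.
  rewrite /powR ifF; last by apply/negbTE; rewrite gt_eqF //; lra.
  rewrite /s divfK ?gt_eqF // lnK //; rewrite posrE; lra.
exists (Num.max alpha^-1 (2 * 2 `^ s^-1)); split.
  by rewrite lt_max invr_gt0 a0.
move=> beta; rewrite gt_max => /andP[hb1 hb2].
have ainv : 1 < alpha^-1 by rewrite invf_gt1 //; lra.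
have b1 : 1 <= beta by lra.
have ab : 1 <= alpha * (1 + beta).
  have : alpha * alpha^-1 < alpha * beta by rewrite ltr_pM2l.
  rewrite mulfV ?gt_eqF // => h; rewrite mulrDr mulr1; lra.
have hB : 2 <= (beta / 2) `^ s.
  have h1 : 2 `^ s^-1 <= beta / 2 by rewrite ler_pdivlMr //; lra.
  have : (2 `^ s^-1) `^ s <= (beta / 2) `^ s.
    by apply: (ge0_ler_powR (ltW s0)); rewrite ?nnegrE ?powR_ge0 //; lra.
  by rewrite -powRrM mulVf ?gt_eqF // powRr1.
exists [set x : 'I_n -> R | (forall k, - c <= x k <= c) /\ (forall i j, x i = x j)].
split; first exact: diag_null.
move=> x0 hx0 hN.
have gx : good c x0.
  split => //; have o0 : 0 <= osc x0 := osc_ge0 hbal x0.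
  rewrite lt_neqAle o0 andbT; apply/eqP => h0; apply: hN.
  split => // i j; apply/eqP; rewrite eq_le.
  have h1 : x0 i - x0 j <= osc x0 := osc_ge x0 i j.
  have h2 : x0 j - x0 i <= osc x0 := osc_ge x0 j i.
  by move: h1 h2; rewrite -h0 !subr_le0 => -> ->.
exact: (main_prob c0 a0 a1 b1 ab hsym hbal e0 hrp s0 hQ hB gx).
Qed.
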